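(* In an $m$-partial SCS, let $r$ and $r'$ be rings (not necessarily distinct) that cross each other at a crossing point $c$, and let $u$ and $u'$ be robots in $r$ and $r'$, respectively. If there are two paths of equal length, one from $u$ to $c$ in $r$ and one from $u'$ to $c$ in $r'$ (each possibly longer than its ring), then neither $u$ nor $u'$ is starving.
   Context: Let $T=\{C_1,\dots,C_n\}$ be pairwise disjoint unit circles in the plane (trajectories) and $\epsilon<0.5$ a communication range. The graph of potential links $G_\epsilon(T)$ has the circle centers as nodes and an edge $\{i,j\}$ whenever the centers of $C_i,C_j$ are at distance at most $2+\epsilon$; it is assumed connected. Points of a circle are identified with angles (modulo $2\pi$), and a robot traverses a circle in one time unit. A schedule is a pair $(f,g)$, $f:T\to[0,2\pi)$, $g:T\to\{-1,1\}$ ($1$ = counterclockwise); the robot on $C_i$ is at angle $f(C_i)+2\pi g(C_i)t$ at time $t$. A communication graph $G=(V,E)$ is a connected spanning subgraph of $G_\epsilon(T)$. The link position $\phi_{ij}$ is the point of $C_i$ closest to $C_j$. A schedule is $G$-synchronized if for every $\{i,j\}\in E$ the robot on $C_i$ is at $\phi_{ij}$ exactly when the robot on $C_j$ is at $\phi_{ji}$. An SCS with communication graph $G$ consists of $n$ robots, one per circle, moving under a $G$-synchronized schedule with $g(C_i)=-g(C_j)$ for all $\{i,j\}\in E$. Shifting protocol: when a robot on $C_i$ reaches $\phi_{ij}$ and there is no robot at $\phi_{ji}$, it moves to $C_j$ and thereafter follows the schedule of $C_j$. An $m$-partial SCS is obtained by removing $n-m$ robots, the remaining $m$ applying the shifting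 protocol. A surviving robot starves if every time it arrives at a link position the corresponding neighbor is absent. A ring is the closed path traversed by a starving robot (following the assigned direction on each circle and always shifting to the neighboring circle at link positions). The length of a path along a ring is the total length of circle arcs it traverses, with multiplicity, ignoring transitions between circles; a path in a ring follows the travel direction of the ring and may contain full tours. The crossing point of neighboring circles $C_i,C_j$ is the midpoint of the segment joining $\phi_{ij}$ and $\phi_{ji}$; rings pass through crossing points. *)

(* Defs.v *)
From Stdlib Require Import Reals Lra Relations.
Open Scope R_scope.

Definition point := (R * R)%type.

Definition dist (p q : point) : R :=
  sqrt ((fst p - fst q) ^ 2 + (snd p - snd q) ^ 2).

(* C_1..C_n : unit circles with centers ctr i (i < n), pairwise disjoint. *)
Definition disjoint_unit_circles (n : nat) (ctr : nat -> point) : Prop :=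
  forall i j, (i < n)%nat -> (j < n)%nat -> i <> j -> 2 < dist (ctr i) (ctr j).

Definition potential_link (n : nat) (ctr : nat -> point) (eps : R) (i j : nat) : Prop :=
  (i < n)%nat /\ (j < n)%nat /\ i <> j /\ dist (ctr i) (ctr j) <= 2 + eps.

Definition graph_connected (n : nat) (E : nat -> nat -> Prop) : Prop :=
  forall i j, (i < n)%nat -> (j < n)%nat ->
    clos_refl_trans nat (fun a b => (a < n)%nat /\ (b < n)%nat /\ E a b) i j.

Definition comm_graph (n : nat) (ctr : nat -> point) (eps : R)
    (E : nat -> nat -> Prop) : Prop :=
  (forall i j, E i j -> potential_link n ctr eps i j) /\
  (forall i j, E i j -> E j i) /\
  graph_connected n E.

(* link position phi_ij : the point of C_i closest to C_j *)
Definition link_pos (ctr : nat -> point) (i j : nat) : point :=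
  let d := dist (ctr i) (ctr j) in
  (fst (ctr i) + (fst (ctr j) - fst (ctr i)) / d,
   snd (ctr i) + (snd (ctr j) - snd (ctr i)) / d).

Definition crossing_point (ctr : nat -> point) (i j : nat) : point :=
  ((fst (link_pos ctr i j) + fst (link_pos ctr j i)) / 2,
   (snd (link_pos ctr i j) + snd (link_pos ctr j i)) / 2).

Definition schedule (n : nat) (f g : nat -> R) : Prop :=
  forall i, (i < n)%nat -> 0 <= f i < 2 * PI /\ (g i = 1 \/ g i = -1).

Definition sched (ctr : nat -> point) (f g : nat -> R) (i : nat) (t : R) : point :=
  (fst (ctr i) + cos (f i + 2 * PI * g i * t),
   snd (ctr i) + sin (f i + 2 * PI * g i * t)).

Definition at_link (ctr : nat -> point) (f g : nat -> R) (i j : nat) (t : R) : Prop :=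
  sched ctr f g i t = link_pos ctr i j.

Definition synchronized (ctr : nat -> point) (f g : nat -> R)
    (E : nat -> nat -> Prop) : Prop :=
  forall i j, E i j -> forall t, at_link ctr f g i j t <-> at_link ctr f g j i t.

Definition SCS (ctr : nat -> point) (f g : nat -> R) (E : nat -> nat -> Prop) : Prop :=
  synchronized ctr f g E /\ (forall i j, E i j -> g i = - g j).

Definition left_lim (w : R -> nat) (t : R) (i : nat) : Prop :=
  exists d, 0 < d /\ forall s, t - d < s < t -> w s = i.

Definition right_const (w : R -> nat) : Prop :=
  forall t, exists d, 0 < d /\ forall s, t <= s < t + d -> w s = w t.

Definition has_left_lims (w : R -> nat) : Prop :=
  forall t, exists i, left_lim w t i.

(* circle j is occupied just before time t (i.e. before the shifts at time t) *)
Definition occupied (m : nat) (loc : nat -> R -> nat) (t : R) (j : nat) : Prop :=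
  exists k, (k < m)%nat /\ left_lim (loc k) t j.

(* An m-partial SCS run: robots k < m start (just before time 0) on distinct
   circles init k; loc k t is the circle of robot k at time t (after the shifts
   occurring at time t); robot k is at position sched (loc k t) t. *)
Definition partial_SCS_run (n m : nat) (ctr : nat -> point) (f g : nat -> R)
    (E : nat -> nat -> Prop) (init : nat -> nat) (loc : nat -> R -> nat) : Prop :=
  (forall k, (k < m)%nat -> (init k < n)%nat) /\
  (forall k k', (k < m)%nat -> (k' < m)%nat -> init k = init k' -> k = k') /\
  forall k, (k < m)%nat ->
    right_const (loc k) /\ has_left_lims (loc k) /\
    (forall t, t < 0 -> loc k t = init k) /\
    (forall t i, 0 <= t -> left_lim (loc k) t i ->
       (exists j, E i j /\ at_link ctr f g i j t /\ ~ occupied m loc t j /\ loc k t = j) \/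
       (~ (exists j, E i j /\ at_link ctr f g i j t /\ ~ occupied m loc t j)
        /\ loc k t = i)).

(* robot k starves: every time it arrives at a link position phi_ij,
   no robot is at phi_ji (equivalently on C_j, by synchronization) *)
Definition starving (m : nat) (ctr : nat -> point) (f g : nat -> R)
    (E : nat -> nat -> Prop) (loc : nat -> R -> nat) (k : nat) : Prop :=
  forall t i j, 0 <= t -> left_lim (loc k) t i -> E i j -> at_link ctr f g i j t ->
    ~ occupied m loc t j.

(* Ring traversal: trajectory of a (virtual) starving robot starting on circle i0
   at time t0, following the schedule and always shifting at link positions.
   At time s >= t0 it is at position sched (v s) s; after time s it has traversed
   a path along the ring of length 2*PI*(s - t0). *)
Definition ring_traj (ctr : nat -> point) (f g : nat -> R) (E : nat -> nat -> Prop)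
    (t0 : R) (i0 : nat) (v : R -> nat) : Prop :=
  right_const v /\ has_left_lims v /\
  (forall t, t < t0 -> v t = i0) /\
  (forall t i, t0 <= t -> left_lim v t i ->
     (exists j, E i j /\ at_link ctr f g i j t /\ v t = j) \/
     (~ (exists j, E i j /\ at_link ctr f g i j t) /\ v t = i)).

(* the ring traversal v reaches the crossing point of C_i, C_j at time T,
   coming from C_i (it is at phi_ij on C_i and crosses over to C_j) *)
Definition reaches_crossing (ctr : nat -> point) (f g : nat -> R)
    (E : nat -> nat -> Prop) (v : R -> nat) (T : R) (i j : nat) : Prop :=
  E i j /\ left_lim v T i /\ at_link ctr f g i j T.

(* Main.v *)
Require Import Defs.
From Stdlib Require Import Reals.
From Stdlib Require Import Lra Lia Classical.
Open Scope R_scope.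

Lemma rmin_in (t d d' : R) : 0 < d -> 0 < d' ->
  t - d < t - Rmin d d' / 2 < t /\ t - d' < t - Rmin d d' / 2 < t.
Proof.
  intros Hd Hd'. pose proof (Rmin_l d d'). pose proof (Rmin_r d d').
  assert (0 < Rmin d d') by (apply Rmin_glb_lt; lra). lra.
Qed.

Lemma left_lim_uniq (w : R -> nat) t i i' : left_lim w t i -> left_lim w t i' -> i = i'.
Proof.
  intros [d [Hd H]] [d' [Hd' H']].
  destruct (rmin_in t d d' Hd Hd') as [A B].
  rewrite <- (H _ A). apply H'. exact B.
Qed.

Lemma fin_min (m : nat) (Q : nat -> R -> Prop) :
  (forall k d d', 0 < d' <= d -> Q k d -> Q k d') ->
  (forall k, (k < m)%nat -> exists d, 0 < d /\ Q k d) ->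
  exists D, 0 < D /\ forall k, (k < m)%nat -> Q k D.
Proof.
  intros Hmono. induction m as [|m IH]; intros H.
  - exists 1. split; [lra|]. intros k Hk. lia.
  - destruct IH as [D [HD HQ]].
    { intros k Hk. apply H. lia. }
    destruct (H m ltac:(lia)) as [d [Hd Hq]].
    exists (Rmin D d). assert (0 < Rmin D d) by (apply Rmin_glb_lt; lra).
    split; auto. intros k Hk.
    destruct (Nat.eq_dec k m) as [->|Hne].
    + apply (Hmono m d); auto. split; auto. apply Rmin_r.
    + apply (Hmono k D); auto. split; auto. apply Rmin_l. apply HQ. lia.
Qed.

Lemma real_ind (P : R -> Prop) (a t0 : R) : a < t0 ->
  (forall s, a < s < t0 -> P s) ->
  (forall s, t0 <= s -> (forall s', a < s' < s -> P s') ->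
     exists d, 0 < d /\ forall s', s <= s' < s + d -> P s') ->
  forall s, a < s -> P s.
Proof.
  intros Hat Hpre Hstep s Hs.
  destruct (Rlt_le_dec s t0) as [Hlt|Hge]; [apply Hpre; lra|].
  apply NNPP; intro HnP.
  set (Es := fun x => forall b, t0 <= b -> ~ P b -> x <= b).
  assert (Hb : bound Es). { exists s. intros x Hx. apply Hx; auto. }
  assert (He : exists x, Es x). { exists t0. intros b Hb' _. exact Hb'. }
  destruct (completeness Es Hb He) as [mm [Hub Hlub]].
  assert (Ht0m : t0 <= mm) by (apply Hub; intros b Hb' _; exact Hb').
  assert (Hbad : forall b, t0 <= b -> ~ P b -> mm <= b).
  { intros b Hb1 Hb2. apply Hlub. intros x Hx. apply Hx; auto. }
  destruct (Hstep mm Ht0m) as [d [Hd Hd']].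
  { intros s' Hs'. apply NNPP; intro Hn.
    destruct (Rlt_le_dec s' t0). apply Hn, Hpre; lra.
    pose proof (Hbad s' r Hn). lra. }
  assert (Es (mm + d)).
  { intros b Hb1 Hb2. pose proof (Hbad b Hb1 Hb2).
    destruct (Rlt_le_dec b (mm + d)); auto. exfalso. apply Hb2, Hd'. lra. }
  pose proof (Hub _ H). lra.
Qed.

Lemma lemmaA (m : nat) (loc : nat -> R -> nat) (w : R -> nat) (s a : R) (iw : nat) :
  a < s -> (forall k, (k < m)%nat -> has_left_lims (loc k)) ->
  left_lim w s iw ->
  (forall s', a < s' < s -> exists k, (k < m)%nat /\ loc k s' = w s') ->
  exists k, (k < m)%nat /\ left_lim (loc k) s iw.
Proof.
  intros Has Hll [dw [Hdw Hw]] Hinv.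
  apply NNPP; intro Hn.
  destruct (fin_min m (fun k d => forall s', s - d < s' < s -> loc k s' <> iw)) as [D [HD HQ]].
  { intros k d d' Hdd HQ s' Hs'. apply HQ. lra. }
  { intros k Hk. destruct (Hll k Hk s) as [ik [dk [Hdk Hk']]].
    exists dk. split; auto. intros s' Hs' Heq.
    apply Hn. exists k. split; auto. exists dk. split; auto.
    intros s'' Hs''. rewrite (Hk' s'' Hs''). rewrite <- Heq. symmetry. apply Hk'. auto. }
  set (e := Rmin (Rmin D dw) (s - a)).
  assert (He : 0 < e) by (apply Rmin_glb_lt; [apply Rmin_glb_lt|]; lra).
  assert (e <= D /\ e <= dw /\ e <= s - a).
  { unfold e. pose proof (Rmin_l (Rmin D dw) (s - a)). pose proof (Rmin_r (Rmin D dw) (s - a)).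
    pose proof (Rmin_l D dw). pose proof (Rmin_r D dw). lra. }
  destruct (Hinv (s - e / 2)) as [k [Hk Hke]]. lra.
  apply (HQ k Hk (s - e / 2)). lra. rewrite Hke. apply Hw. lra.
Qed.

Lemma link_uniq n ctr eps (E : nat -> nat -> Prop) i j j' :
  disjoint_unit_circles n ctr -> eps < 1 / 2 ->
  (forall i j, E i j -> potential_link n ctr eps i j) ->
  E i j -> E i j' -> link_pos ctr i j = link_pos ctr i j' -> j = j'.
Proof.
  intros Hdis Heps Hpl Ej Ej' Heq.
  destruct (Nat.eq_dec j j') as [|Hne]; auto. exfalso.
  destruct (Hpl _ _ Ej) as [Hi [Hj [Hij Hd]]].
  destruct (Hpl _ _ Ej') as [_ [Hj' [Hij' Hd']]].
  pose proof (Hdis i j Hi Hj Hij) as D1.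
  pose proof (Hdis i j' Hi Hj' Hij') as D2.
  pose proof (Hdis j j' Hj Hj' Hne) as D3.
  unfold link_pos in Heq. injection Heq as Hx Hy.
  unfold Defs.dist in *.
  set (x := fst (ctr j) - fst (ctr i)) in *.
  set (y := snd (ctr j) - snd (ctr i)) in *.
  set (x' := fst (ctr j') - fst (ctr i)) in *.
  set (y' := snd (ctr j') - snd (ctr i)) in *.
  set (d := sqrt ((fst (ctr i) - fst (ctr j)) ^ 2 + (snd (ctr i) - snd (ctr j)) ^ 2)) in *.
  set (d' := sqrt ((fst (ctr i) - fst (ctr j')) ^ 2 + (snd (ctr i) - snd (ctr j')) ^ 2)) in *.
  set (D := sqrt ((fst (ctr j) - fst (ctr j')) ^ 2 + (snd (ctr j) - snd (ctr j')) ^ 2)) in *.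
  assert (Hdd : d * d = x ^ 2 + y ^ 2).
  { unfold d. rewrite sqrt_sqrt. unfold x, y. ring. apply Rplus_le_le_0_compat; apply pow2_ge_0. }
  assert (Hdd' : d' * d' = x' ^ 2 + y' ^ 2).
  { unfold d'. rewrite sqrt_sqrt. unfold x', y'. ring. apply Rplus_le_le_0_compat; apply pow2_ge_0. }
  assert (HDD : D * D = (x - x') ^ 2 + (y - y') ^ 2).
  { unfold D. rewrite sqrt_sqrt. unfold x, y, x', y'. ring. apply Rplus_le_le_0_compat; apply pow2_ge_0. }
  assert (Hx' : x / d = x' / d') by lra.
  assert (Hy' : y / d = y' / d') by lra.
  set (e1 := x / d) in *. set (e2 := y / d) in *.
  assert (Ex : x = e1 * d) by (unfold e1; field; lra).
  assert (Ey : y = e2 * d) by (unfold e2; field; lra).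
  assert (Ex' : x' = e1 * d') by (rewrite Hx'; field; lra).
  assert (Ey' : y' = e2 * d') by (rewrite Hy'; field; lra).
  assert (He : e1 ^ 2 + e2 ^ 2 = 1).
  { rewrite Ex, Ey in Hdd. assert ((e1^2 + e2^2 - 1) * (d * d) = 0) by nra.
    apply Rmult_integral in H. destruct H; nra. }
  assert (D * D = (d - d') ^ 2).
  { rewrite HDD, Ex, Ey, Ex', Ey'.
    replace ((e1 * d - e1 * d') ^ 2 + (e2 * d - e2 * d') ^ 2) with
      ((e1 ^ 2 + e2 ^ 2) * (d - d') ^ 2) by ring. rewrite He. ring. }
  nra.
Qed.

Section Main.
Variables (n m : nat) (ctr : nat -> point) (eps : R)
  (E : nat -> nat -> Prop) (f g : nat -> R)
  (init : nat -> nat) (loc : nat -> R -> nat).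

Hypothesis LU : forall i j j' t, E i j -> E i j' -> at_link ctr f g i j t ->
  at_link ctr f g i j' t -> j = j'.
Hypothesis Esym : forall i j, E i j -> E j i.
Hypothesis Sync : synchronized ctr f g E.
Hypothesis Run : partial_SCS_run n m ctr f g E init loc.

Lemma token (u' : nat) (t0 : R) (iu' : nat) (r' : R -> nat) :
  (u' < m)%nat -> 0 <= t0 -> left_lim (loc u') t0 iu' -> ring_traj ctr f g E t0 iu' r' ->
  exists a, a < t0 /\ forall s, a < s -> exists k, (k < m)%nat /\ loc k s = r' s.
Proof.
  intros Hu' Ht0 [d0 [Hd0 Hl0]] [Rrc [Rll [Rpre Rrule]]].
  destruct Run as [_ [_ Hrun]].
  exists (t0 - d0). split; [lra|].
  apply real_ind with (t0 := t0); [lra| |].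
  - intros s Hs. exists u'. split; auto. rewrite Hl0, Rpre; auto; lra.
  - intros s Hs IH.
    destruct (Rll s) as [i0 Hi0].
    destruct (lemmaA m loc r' s (t0 - d0) i0) as [k [Hk Hkl]]; auto; try lra.
    { intros k Hk. apply Hrun; auto. }
    assert (Hex : exists k', (k' < m)%nat /\ loc k' s = r' s).
    { destruct (Hrun k Hk) as [_ [_ [_ rulek]]].
      specialize (rulek s i0 ltac:(lra) Hkl).
      destruct (Rrule s i0 Hs Hi0) as [[j [Ej [Aj Rj]]] | [Hno Rj]].
      - destruct rulek as [[j'' [Ej'' [Aj'' [Occ'' Lj'']]]] | [Hno' Lk]].
        + exists k. split; auto. rewrite Rj, Lj''. apply (LU i0 j'' j s); auto.
        + assert (Hocc : occupied m loc s j).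
          { apply NNPP; intro Hn. apply Hno'. exists j; auto. }
          destruct Hocc as [k2 [Hk2 Hk2l]].
          exists k2. split; auto. rewrite Rj.
          destruct (Hrun k2 Hk2) as [_ [_ [_ rule2]]].
          destruct (rule2 s j ltac:(lra) Hk2l) as [[j3 [Ej3 [Aj3 [Occ3 L3]]]] | [_ L3]]; auto.
          exfalso. assert (j3 = i0).
          { apply (LU j j3 i0 s); auto. apply (Sync i0 j Ej s). auto. }
          rewrite H in Occ3. apply Occ3. exists k. split; auto.
      - destruct rulek as [[j'' [Ej'' [Aj'' [Occ'' Lj'']]]] | [Hno' Lk]].
        + exfalso. apply Hno. exists j''. auto.
        + exists k. split; auto. rewrite Rj, Lk. auto. }
    destruct Hex as [k' [Hk' Heq]].
    destruct (Hrun k' Hk') as [rck _].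
    destruct (rck s) as [d1 [Hd1 H1]]. destruct (Rrc s) as [d2 [Hd2 H2]].
    exists (Rmin d1 d2). split. apply Rmin_glb_lt; auto.
    intros s' Hs'. pose proof (Rmin_l d1 d2). pose proof (Rmin_r d1 d2).
    exists k'. split; auto. rewrite H1, H2; auto; lra.
Qed.

Lemma follow (u : nat) (t0 : R) (iu : nat) (r : R -> nat) :
  (u < m)%nat -> 0 <= t0 -> left_lim (loc u) t0 iu -> ring_traj ctr f g E t0 iu r ->
  starving m ctr f g E loc u ->
  exists a, a < t0 /\ forall s, a < s -> loc u s = r s.
Proof.
  intros Hu Ht0 [d0 [Hd0 Hl0]] [Rrc [Rll [Rpre Rrule]]] Hst.
  destruct Run as [_ [_ Hrun]].
  destruct (Hrun u Hu) as [rcu [_ [_ ruleu]]].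
  exists (t0 - d0). split; [lra|].
  apply real_ind with (t0 := t0); [lra| |].
  - intros s Hs. rewrite Hl0, Rpre; auto; lra.
  - intros s Hs IH.
    destruct (Rll s) as [i0 [d [Hd Hi0]]].
    assert (Hlu : left_lim (loc u) s i0).
    { exists (Rmin d (s - (t0 - d0))). split. apply Rmin_glb_lt; lra.
      intros s' Hs'. pose proof (Rmin_l d (s - (t0 - d0))).
      pose proof (Rmin_r d (s - (t0 - d0))).
      rewrite IH by lra. apply Hi0. lra. }
    assert (Hi0' : left_lim r s i0) by (exists d; auto).
    assert (Heq : loc u s = r s).
    { destruct (ruleu s i0 ltac:(lra) Hlu) as [[j'' [Ej'' [Aj'' [Occ'' Lj'']]]] | [Hno' Lk]];
      destruct (Rrule s i0 Hs Hi0') as [[j [Ej [Aj Rj]]] | [Hno Rj]].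
      - rewrite Rj, Lj''. apply (LU i0 j'' j s); auto.
      - exfalso. apply Hno. exists j''. auto.
      - exfalso. apply Hno'. exists j. split; auto. split; auto.
        apply (Hst s i0 j); auto; lra.
      - rewrite Rj, Lk. auto. }
    destruct (rcu s) as [d1 [Hd1 H1]]. destruct (Rrc s) as [d2 [Hd2 H2]].
    exists (Rmin d1 d2). split. apply Rmin_glb_lt; auto.
    intros s' Hs'. pose proof (Rmin_l d1 d2). pose proof (Rmin_r d1 d2).
    rewrite H1, H2; auto; lra.
Qed.

Lemma half (u u' : nat) (t0 T : R) (iu iu' : nat) (r r' : R -> nat) (i j : nat) :
  (u < m)%nat -> (u' < m)%nat -> 0 <= t0 -> t0 <= T ->
  left_lim (loc u) t0 iu -> ring_traj ctr f g E t0 iu r ->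
  left_lim (loc u') t0 iu' -> ring_traj ctr f g E t0 iu' r' ->
  reaches_crossing ctr f g E r T i j -> left_lim r' T j ->
  ~ starving m ctr f g E loc u.
Proof.
  intros Hu Hu' Ht0 HT Hl Hr Hl' Hr' [Eij [[d1 [Hd1 H1]] Aij]] Hr'T Hst.
  destruct (follow u t0 iu r Hu Ht0 Hl Hr Hst) as [a [Ha Hfol]].
  destruct (token u' t0 iu' r' Hu' Ht0 Hl' Hr') as [a' [Ha' Htok]].
  destruct Run as [_ [_ Hrun]].
  destruct (lemmaA m loc r' T a' j) as [k [Hk Hkl]]; auto; try lra.
  { intros k Hk. apply Hrun; auto. }
  { intros s' Hs'. apply Htok. lra. }
  apply (Hst T i j); auto; try lra.
  - exists (Rmin d1 (T - a)). split. apply Rmin_glb_lt; lra.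
    intros s' Hs'. pose proof (Rmin_l d1 (T - a)). pose proof (Rmin_r d1 (T - a)).
    rewrite Hfol by lra. apply H1. lra.
  - exists k. auto.
Qed.

End Main.

Theorem lemma5 (n m : nat) (ctr : nat -> point) (eps : R)
  (E : nat -> nat -> Prop) (f g : nat -> R)
  (init : nat -> nat) (loc : nat -> R -> nat)
  (u u' : nat) (t0 : R) (iu iu' : nat) (r r' : R -> nat)
  (L : R) (i j : nat) (c : point) :
  disjoint_unit_circles n ctr ->
  0 < eps < 1 / 2 ->
  graph_connected n (potential_link n ctr eps) ->
  comm_graph n ctr eps E ->
  schedule n f g ->
  SCS ctr f g E ->
  partial_SCS_run n m ctr f g E init loc ->
  (u < m)%nat -> (u' < m)%nat ->
  0 <= t0 ->
  (* u lies on ring r and u' on ring r' (positions just before time t0) *)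
  left_lim (loc u) t0 iu -> ring_traj ctr f g E t0 iu r ->
  left_lim (loc u') t0 iu' -> ring_traj ctr f g E t0 iu' r' ->
  (* r and r' cross each other at c = crossing point of C_i, C_j *)
  c = crossing_point ctr i j ->
  (* paths of the same length L from u to c along r and from u' to c along r' *)
  0 <= L ->
  reaches_crossing ctr f g E r (t0 + L / (2 * PI)) i j ->
  reaches_crossing ctr f g E r' (t0 + L / (2 * PI)) j i ->
  ~ starving m ctr f g E loc u /\ ~ starving m ctr f g E loc u'.
Proof.
  intros Hdis Heps _ [Hpl [Hsym _]] _ [Sync _] Run Hu Hu' Ht0 Hl Hr Hl' Hr' _ HL RC RC'.
  assert (LU : forall i j j' t, E i j -> E i j' -> at_link ctr f g i j t ->
    at_link ctr f g i j' t -> j = j').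
  { intros a b b' t Eb Eb' Ab Ab'. apply (link_uniq n ctr eps E a b b'); auto; try lra.
    unfold at_link in *. rewrite <- Ab, <- Ab'. reflexivity. }
  assert (HT : t0 <= t0 + L / (2 * PI)).
  { pose proof PI_RGT_0. assert (0 <= L / (2 * PI)).
    { unfold Rdiv. apply Rmult_le_pos; auto. left. apply Rinv_0_lt_compat. lra. }
    lra. }
  split.
  - apply (half n m ctr E f g init loc LU Hsym Sync Run u u' t0 (t0 + L / (2 * PI)) iu iu' r r' i j); auto.
    destruct RC' as [_ [H _]]. exact H.
  - apply (half n m ctr E f g init loc LU Hsym Sync Run u' u t0 (t0 + L / (2 * PI)) iu' iu r' r j i); auto.
    destruct RC as [_ [H _]]. exact H.
Qed.
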